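(* Let $u,\gamma,\lambda_A,\lambda_{CCN},\lambda_{CP}>0$, $\mu\in(0,1]$, $\varpi\in\mathbb{R}$, $T>0$, let $F$ be a differentiable cumulative distribution function and $G$ a continuous cumulative distribution function. Let $D:[0,T]\to\mathbb{R}$ be differentiable with $D(0)=u-\varpi$, let $b(r)=e^{-\gamma r}u-D(r)$ (assumed continuous), and set $W(x)=e^{\lambda_{CCN}(F(x)-1)}\big(1-e^{\lambda_{CP}(G(x)-1)}\big)$ and \[ \mathrm{Pay}(r)=\big(1-e^{\lambda_{CP}(G(b(r))-1)}\big)\Big[e^{-\lambda_{CCN}}b(T)+\int_{b(T)}^{b(r)}\lambda_{CCN}e^{\lambda_{CCN}(F(x)-1)}\,x\,F'(x)\,dx\Big]. \] Suppose that for every $r\in(0,T]$ and every sufficiently small $\delta>0$ (with $\delta\mu\lambda_A<1$), \[ D(r)=\frac{1}{1+\gamma\delta}\Big[\big(1-\mu\lambda_A\delta\,W(b(r))\big)D(r-\delta)+\mu\lambda_A\delta\big(W(b(r))e^{-\gamma r}u-\mathrm{Pay}(r)\big)\Big]. \] Then for every $r\in(0,T]$, \[ \gamma D(r)=-D'(r)+\mu\lambda_A\Big(W(b(r))\big(e^{-\gamma r}u-D(r)\big)-\mathrm{Pay}(r)\Big). \]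
   Context: Model (second-price auction market between cloud managers and private cloud providers): auctions occur at Poisson rate $\lambda_A$; a fraction $\mu$ of managers bid actively; the number of competing managers is Poisson with mean $\lambda_{CCN}$ and the number of providers Poisson with mean $\lambda_{CP}$; $F$ is the stationary cdf of managers' bids, $G$ the cdf of providers' offered prices; $T$ is the total participation time and $r$ the residual participation time; a manager bids $b(r)=e^{-\gamma r}u-D(r)$, with $u$ the utility, $\gamma$ the rate of time preference and $D(r)$ the discounted expected utility; $W(b)$ is the probability of winning with at least one provider offering a lower price; the winner pays the second-highest bid, whose expected value is $\mathrm{Pay}(r)$; at $r=0$ the manager buys at flat price $\varpi$, so $D(0)=u-\varpi$. *)

(* Defs.v *)
From Stdlib Require Import Reals.
From Coquelicot Require Import Coquelicot.
Open Scope R_scope.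

Definition is_cdf (F : R -> R) : Prop :=
  (forall x y, x <= y -> F x <= F y) /\
  (forall x, filterlim F (at_right x) (locally (F x))) /\
  is_lim F m_infty 0 /\
  is_lim F p_infty 1.

Definition is_derive_on (f : R -> R) (a b x l : R) : Prop :=
  filterlim (fun h => (f (x + h) - f x) / h)
    (within (fun h => h <> 0 /\ a <= x + h <= b) (locally 0))
    (locally l).

Definition Wfun (lCCN lCP : R) (F G : R -> R) (x : R) : R :=
  exp (lCCN * (F x - 1)) * (1 - exp (lCP * (G x - 1))).

Definition Payfun (lCCN lCP T : R) (F F' G b : R -> R) (r : R) : R :=
  (1 - exp (lCP * (G (b r) - 1))) *
  (exp (- lCCN) * b T +
   RInt (fun x => lCCN * exp (lCCN * (F x - 1)) * x * F' x) (b T) (b r)).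

(* Main.v *)
Require Import Defs.
From Stdlib Require Import Reals.
From Coquelicot Require Import Coquelicot.
From Stdlib Require Import Lra Psatz.
Open Scope R_scope.

Theorem theorem2
  (u gamma lA lCCN lCP mu varpi T : R)
  (F F' G D D' : R -> R)
  (hu : 0 < u) (hgamma : 0 < gamma) (hlA : 0 < lA) (hlCCN : 0 < lCCN)
  (hlCP : 0 < lCP) (hmu : 0 < mu <= 1) (hT : 0 < T)
  (hFcdf : is_cdf F) (hF' : forall x, is_derive F x (F' x))
  (hGcdf : is_cdf G) (hGcont : forall x, continuous G x)
  (hD : forall r, 0 <= r <= T -> is_derive_on D 0 T r (D' r))
  (hD0 : D 0 = u - varpi)
  (hbcont : forall r, 0 <= r <= T ->
     filterlim (fun s => exp (- gamma * s) * u - D s)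
       (within (fun s => 0 <= s <= T) (locally r))
       (locally (exp (- gamma * r) * u - D r)))
  (hrec : forall r, 0 < r <= T ->
     exists delta0, 0 < delta0 /\
     forall delta, 0 < delta < delta0 -> delta <= r -> delta * mu * lA < 1 ->
       let b := fun s => exp (- gamma * s) * u - D s in
       D r = / (1 + gamma * delta) *
         ((1 - mu * lA * delta * Wfun lCCN lCP F G (b r)) * D (r - delta) +
          mu * lA * delta *
            (Wfun lCCN lCP F G (b r) * exp (- gamma * r) * u
             - Payfun lCCN lCP T F F' G b r))) :
  forall r, 0 < r <= T ->
    let b := fun s => exp (- gamma * s) * u - D s in
    gamma * D r =
      - D' r + mu * lA *
        (Wfun lCCN lCP F G (b r) * (exp (- gamma * r) * u - D r)
         - Payfun lCCN lCP T F F' G b r).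
Proof.
  intros r hr b.
  set (c := mu * lA).
  set (W := Wfun lCCN lCP F G (b r)).
  set (P := Payfun lCCN lCP T F F' G b r).
  set (K := exp (- gamma * r) * u).
  set (g := fun h => (D (r + h) - D r) / h).
  assert (hc : 0 < c) by (unfold c; nra).
  assert (hg : filterlim g (at_left 0) (locally (D' r))).
  { intros Q HQ. destruct (hD r ltac:(lra) Q HQ) as [eps Heps].
    assert (hm : 0 < Rmin eps r) by (apply Rmin_pos; [apply cond_pos|lra]).
    exists (mkposreal _ hm). intros h Hb Hh. apply Heps.
    - revert Hb. unfold ball; simpl; unfold AbsRing_ball, abs, minus, plus, opp; simpl.
      pose proof (Rmin_l eps r). lra.
    - revert Hb. unfold ball; simpl; unfold AbsRing_ball, abs, minus, plus, opp; simpl.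
      intros Hb. pose proof (Rmin_r eps r). rewrite Ropp_0, Rplus_0_r in Hb.
      apply Rabs_def2 in Hb. lra. }
  assert (hcont : filterlim (fun h => D (r + h)) (at_left 0) (locally (D r))).
  { assert (hm : filterlim (fun h => h * g h) (at_left 0) (locally (0 * D' r))).
    { apply (filterlim_comp_2 (G := locally 0) (H := locally (D' r)) (fun h => h) g Rmult).
      - intros Q HQ. destruct HQ as [eps Heps]. exists eps. intros h Hb _. apply Heps. exact Hb.
      - exact hg.
      - exact (filterlim_mult 0 (D' r)). }
    rewrite Rmult_0_l in hm.
    assert (hm2 : filterlim (fun h => D r + h * g h) (at_left 0) (locally (D r + 0))).
    { eapply filterlim_comp; [exact hm|].
      apply (proj1 (continuity_pt_filterlim _ _)). reg. }
    rewrite Rplus_0_r in hm2.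
    apply (filterlim_ext_loc _ _ _ hm2 ) || idtac.
    eapply filterlim_ext_loc; [|exact hm2].
    exists (mkposreal 1 Rlt_0_1). intros h _ Hh. unfold g. field. lra. }
  set (E := fun h => - gamma * D r - c * W * D (r + h) + c * (W * K - P)).
  assert (hE : filterlim E (at_left 0) (locally (- gamma * D r - c * W * D r + c * (W * K - P)))).
  { apply filterlim_comp with (f := fun h => D (r + h)) (G := locally (D r)) (g := fun y => - gamma * D r - c * W * y + c * (W * K - P)); [exact hcont|].
    apply (proj1 (continuity_pt_filterlim (fun y => - gamma * D r - c * W * y + c * (W * K - P)) (D r))). reg. }
  assert (hgE : filterlim g (at_left 0) (locally (- gamma * D r - c * W * D r + c * (W * K - P)))).
  { eapply filterlim_ext_loc; [|exact hE].
    destruct (hrec r hr) as [d0 [hd0 Hd]].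
    assert (hm : 0 < Rmin d0 (Rmin r (/ c))).
    { apply Rmin_pos; [lra|apply Rmin_pos; [lra|apply Rinv_0_lt_compat; lra]]. }
    exists (mkposreal _ hm). intros h Hb Hh.
    revert Hb. unfold ball; simpl; unfold AbsRing_ball, abs, minus, plus, opp; simpl.
    intros Hb. rewrite Ropp_0, Rplus_0_r in Hb. apply Rabs_def2 in Hb.
    pose proof (Rmin_l d0 (Rmin r (/ c))). pose proof (Rmin_r d0 (Rmin r (/ c))).
    pose proof (Rmin_l r (/ c)). pose proof (Rmin_r r (/ c)).
    assert (hdc : - h * c < 1).
    { assert (- h < / c) by lra.
      apply (Rmult_lt_compat_r c) in H3; [|lra]. rewrite Rinv_l in H3; lra. }
    specialize (Hd (- h) ltac:(lra) ltac:(lra) ltac:(unfold c in hdc; lra)).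
    cbv zeta in Hd. fold W P in Hd.
    replace (r - - h) with (r + h) in Hd by ring.
    assert (Hx : D r * (1 + gamma * - h) =
       (1 - mu * lA * - h * W) * D (r + h) + mu * lA * - h * (W * exp (- gamma * r) * u - P)).
    { rewrite Hd at 1. unfold W, P, b. field. nra. }
    unfold E, g, K, c. apply (Rmult_eq_reg_r h); [|lra].
    replace ((D (r + h) - D r) / h * h) with (D (r + h) - D r) by (field; lra). nra. }
  pose proof (filterlim_locally_unique (F := at_left 0) g _ _ hg hgE) as Hu.
  fold c. rewrite Hu. ring.
Qed.
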